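(* Let $d\ge2$ and let $\mathbf{p}^\star=(1,p_2^\star,\dots,p_d^\star)\in(0,\infty)^d$ be a maximizer over $\mathbf{p}\in(0,\infty)^d$ of $$\min_{k\in\{1,\dots,d\}}\frac{\prod_{i=1}^d p_i}{D_k(\mathbf{p})^d}.$$ Then $D(\mathbf{p}^\star):=\max_{k\in\{1,\dots,d\}}D_k(\mathbf{p}^\star)=D_1(\mathbf{p}^\star)$.
   Context: For $k\in\{1,\dots,d\}$ let $\mathbf{w}_k\in\mathbb{R}^d$ have entries $w_{k,i}=0$ for $i<k$, $w_{k,k}=k$, $w_{k,i}=i-1$ for $k<i\le d$, and set $D_k(\mathbf{p})=\sqrt{\sum_{i=1}^d w_{k,i}^2p_i^2}$. Thus e.g. $D_1(\mathbf{p})^2=p_1^2+p_2^2+4p_3^2+\dots+(d-1)^2p_d^2$ and $D_d(\mathbf{p})^2=d^2p_d^2$. *)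

(* Defs.v *)
From mathcomp Require Import all_boot all_order all_algebra.
From mathcomp Require Import reals.
Set Implicit Arguments. Unset Strict Implicit. Unset Printing Implicit Defensive.
Import Order.TTheory GRing.Theory Num.Theory.
Local Open Scope ring_scope.

(* Indices are 0-based: ordinal i : 'I_d stands for the paper's index i+1.
   Paper: w_{k,i} = 0 (i<k), k (i=k), i-1 (i>k), for 1-based k,i.
   0-based (k,i): 0 (i<k), k+1 (i=k), i (i>k). *)
Definition wgt (d : nat) (k i : 'I_d) : nat :=
  if (i < k)%N then 0%N else if i == k then k.+1 else nat_of_ord i.

Definition Dk {R : realType} (d : nat) (k : 'I_d) (p : 'I_d -> R) : R :=
  Num.sqrt (\sum_(i < d) ((wgt k i)%:R ^+ 2 * p i ^+ 2)).

Definition ratio {R : realType} (d : nat) (p : 'I_d -> R) (k : 'I_d) : R :=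
  (\prod_(i < d) p i) / (Dk k p) ^+ d.

Definition objective {R : realType} (n : nat) (p : 'I_n.+1 -> R) : R :=
  \big[Num.min/ratio p ord0]_(k < n.+1) ratio p k.

Definition positive_vec {R : realType} (d : nat) (p : 'I_d -> R) : Prop :=
  forall i, 0 < p i.

Definition Dmax {R : realType} (n : nat) (p : 'I_n.+1 -> R) : R :=
  \big[Num.max/Dk ord0 p]_(k < n.+1) Dk k p.

(* Main.v *)
Require Import Defs.
From mathcomp Require Import all_boot all_order all_algebra.
From mathcomp Require Import reals.
From mathcomp Require Import ring.
Import Order.TTheory GRing.Theory Num.Theory.
Local Open Scope ring_scope.

Section Aux.
Variable R : realType.
Variable n : nat.

Lemma obj_le (p : 'I_n.+1 -> R) k : objective p <= Defs.ratio p k.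
Proof.
rewrite /objective (bigD1 k) //= ge_min lexx //.
Qed.

Lemma obj_ge (p : 'I_n.+1 -> R) c : (forall k, c <= Defs.ratio p k) -> c <= objective p.
Proof.
move=> H; rewrite /objective; apply: (big_ind (fun x => c <= x)) => //.
by move=> x y hx hy; rewrite le_min hx hy.
Qed.

Lemma Dmax_ex (p : 'I_n.+1 -> R) : exists j, Dmax p = Dk j p.
Proof.
rewrite /Dmax; apply: (big_ind (fun x => exists j, x = Dk j p)).
- by exists ord0.
- move=> x y [i ->] [j ->]; rewrite /Order.max; case: ifP => _.
  + by exists j.
  + by exists i.
- by move=> i _; exists i.
Qed.

Lemma Dmax_ge0 (p : 'I_n.+1 -> R) : Dk ord0 p <= Dmax p.
Proof. by rewrite /Dmax (bigD1 ord0) //= le_max lexx. Qed.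

End Aux.

Theorem lemma4 (R : realType) (n : nat) (pstar : 'I_n.+2 -> R) :
  positive_vec pstar ->
  pstar ord0 = 1 ->
  (forall p : 'I_n.+2 -> R, positive_vec p -> objective p <= objective pstar) ->
  Dmax pstar = Dk ord0 pstar.
Proof.
move=> hpos h1 hmax.
set p := pstar in hpos h1 hmax *.
set M := Dmax p.
set D0 := Dk ord0 p.
have hMD : D0 <= M by apply: Dmax_ge0.
case: (ltP D0 M) => hlt; last by apply/eqP; rewrite eq_le hlt hMD.
exfalso.
set S := fun k (q : 'I_n.+2 -> R) => \sum_(i < n.+2) ((wgt k i)%:R ^+ 2 * q i ^+ 2).
have S_ge0 : forall k q, 0 <= S k q.
  move=> k q; apply: sumr_ge0 => i _; apply: mulr_ge0; apply: sqr_ge0.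
have D0ge0 : 0 <= D0 by apply: sqrtr_ge0.
have hD0sq : D0 ^+ 2 = S ord0 p by rewrite /D0 /Dk sqr_sqrtr //; apply: (S_ge0 ord0 p).
have M0 : 0 <= M by apply: le_trans D0ge0 hMD.
have hsq : D0 ^+ 2 < M ^+ 2 by rewrite ltr_pXn2r // nnegrE.
set a := 1 + M ^+ 2 - S ord0 p.
have ha1 : 1 < a by rewrite /a -hD0sq -addrA ltrDl subr_gt0.
set t := Num.sqrt a.
have ht1 : 1 < t by rewrite /t -sqrtr1 ltr_sqrt // (lt_trans ltr01 ha1).
have ht2 : t ^+ 2 = a by rewrite /t sqr_sqrtr // ltW // (lt_trans ltr01 ha1).
have ht0 : 0 < t by apply: lt_trans ht1.
set q := fun i : 'I_n.+2 => if i == ord0 then t else p i.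
have qpos : positive_vec q by move=> i; rewrite /q; case: ifP.
have hprod : \prod_(i < n.+2) q i = t * \prod_(i < n.+2) p i.
  rewrite (bigD1 ord0) //= [in RHS](bigD1 ord0) //= /q eqxx h1 mul1r.
  congr (_ * _); apply: eq_bigr => i /negbTE ->; done.
have hDk : forall k : 'I_n.+2, k != ord0 -> Dk k q = Dk k p.
  move=> k hk; rewrite /Dk; congr Num.sqrt; apply: eq_bigr => i _.
  rewrite /q; case: eqP => // ->.
  have -> : wgt k ord0 = 0%N.
    by rewrite /wgt /= lt0n; move: hk; rewrite -(inj_eq val_inj) /= => ->.
  by rewrite expr0n /= !mul0r.
have hD0q : Dk ord0 q = M.
  rewrite /Dk.
  have -> : \sum_(i < n.+2) ((wgt ord0 i)%:R ^+ 2 * q i ^+ 2) = M ^+ 2.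
    rewrite (bigD1 ord0) //= /q eqxx.
    have -> : wgt (ord0 : 'I_n.+2) ord0 = 1%N by [].
    rewrite expr1n mul1r ht2 /a.
    have : S ord0 p = 1 + \sum_(i < n.+2 | i != ord0) ((wgt ord0 i)%:R ^+ 2 * p i ^+ 2).
      by rewrite /S (bigD1 ord0) //= h1 expr1n mulr1.
    move=> ->.
    have -> : \sum_(i < n.+2 | i != ord0) ((wgt ord0 i)%:R ^+ 2 * (if i == ord0 then t else p i) ^+ 2)
            = \sum_(i < n.+2 | i != ord0) ((wgt ord0 i)%:R ^+ 2 * p i ^+ 2).
      by apply: eq_bigr => i /negbTE ->.
    by ring.
  by rewrite sqrtr_sqr ger0_norm // (le_trans D0ge0 hMD).
have hobj_pos : 0 < objective p.
  have [k0 _] : exists k0 : 'I_n.+2, True by exists ord0.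
  have hr : forall k, 0 < Defs.ratio p k.
    move=> k; rewrite /Defs.ratio; apply: divr_gt0.
      by apply: prodr_gt0 => i _; apply: hpos.
    apply: exprn_gt0; rewrite /Dk sqrtr_gt0.
    rewrite (bigD1 k) //= ltr_pwDl //; last first.
      by apply: sumr_ge0 => i _; apply: mulr_ge0; apply: sqr_ge0.
    have -> : wgt k k = k.+1 by rewrite /wgt ltnn eqxx.
    by apply: mulr_gt0; apply: exprn_gt0; [rewrite ltr0n | apply: hpos].
  have [j hj] : exists j, objective p = Defs.ratio p j.
    rewrite /objective; apply: (big_ind (fun x => exists j, x = Defs.ratio p j)).
    - by exists ord0.
    - move=> x y [i ->] [j ->]; rewrite /Order.min; case: ifP => _.
      + by exists i.
      + by exists j.
    - by move=> i _; exists i.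
  by rewrite hj.
have hge : t * objective p <= objective q.
  apply: obj_ge => k; rewrite /Defs.ratio hprod.
  case: (eqVneq k ord0) => [->|hk].
  - rewrite hD0q; have [j hj] := @Dmax_ex _ _ p.
    rewrite -mulrA ler_pM2l // /M hj; exact: obj_le.
  - rewrite hDk // -mulrA ler_pM2l //; exact: obj_le.
have := hmax q qpos.
have : objective p < t * objective p by rewrite ltr_pMl.
move=> h1' h2'; have := lt_le_trans h1' (le_trans hge h2'); by rewrite ltxx.
Qed.
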